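(* Let $n\ge1$, $N:=n+1$, $B\in[1,n+1]$, per-sample losses $\ell_1,\dots,\ell_{NB}$ twice differentiable, and $\pi$ a uniformly random permutation of $[1,NB]$. Then $$\mathbb{E}_\pi c_2^{(n)}(\theta)=\big(\alpha_{=}(\beta)+\alpha_{\neq}(\beta)\big)\nabla^2L\nabla L+\Big(\alpha_{=}(\beta)\frac{N-1}{2(NB-1)}-\alpha_{\neq}(\beta)\frac{1}{2(NB-1)}\Big)\nabla\operatorname{tr}\Sigma,$$ where $$\alpha_{=}(\beta)=-\frac{\beta[1-\beta^n(1+\beta)+\beta^{2n+1}]}{(1-\beta)^2(1+\beta)},\qquad\alpha_{\neq}(\beta)=\frac{-2\beta^2+2n(1-\beta^2)\beta^{n+1}+2\beta^{2n+2}}{(1-\beta)^3(1+\beta)}.$$ Consequently $$\mathbb{E}_\pi c_2^{(n)}=\Big(-\frac{\beta}{(1-\beta)^3}+o_n(1)\Big)\nabla^2L\nabla L+\Big(-\frac{\beta}{2(1-\beta)^2(1+\beta)}+o_n(1)\Big)\frac{\nabla\operatorname{tr}\Sigma}{B},$$ where the $o_n(1)$ terms are scalars (depending on $\beta,n,B$) tending to $0$ as $n\to\infty$ for fixed $\beta$, uniformly in $B\in[1,n+1]$.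
   Context: Fix $\beta\in(0,1)$. Mini-batch losses: $L^{(k)}(\theta)=\frac1B\sum_{r=kB+1}^{kB+B}\ell_{\pi(r)}(\theta)$ for $k\in[0,n]$; full loss $L=\frac1{NB}\sum_{s}\ell_s$; $\Sigma_{ij}=\frac1{NB}\sum_{p=1}^{NB}\partial_i(\ell_p-L)\partial_j(\ell_p-L)$ is the empirical covariance of per-sample gradients. The second memoryless iteration coefficient of mini-batch heavy-ball momentum is $$c_2^{(n)}(\theta)=-\beta\sum_{b=0}^{n-1}\beta^b\sum_{l'=1}^{b+1}\sum_{b'=0}^{n-l'}\beta^{b'}\nabla^2L^{(n-1-b)}(\theta)\nabla L^{(n-l'-b')}(\theta).$$ $\mathbb{E}_\pi$ is the expectation over $\pi$. *)

(* Defs.v *)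
From HB Require Import structures.
From mathcomp Require Import all_boot all_order all_algebra all_fingroup.
From mathcomp Require Import all_classical all_reals all_analysis.
Set Implicit Arguments. Unset Strict Implicit. Unset Printing Implicit Defensive.
Import Order.TTheory GRing.Theory Num.Theory.
Import numFieldNormedType.Exports.
Local Open Scope ring_scope.

Section Defs.
Variables (R : realType) (d : nat).
Notation V := 'cV[R]_d.

Definition partial (i : 'I_d) (f : V -> R) (x : V) : R :=
  'D_(delta_mx i 0 : V) f x.

Definition grad (f : V -> R) (x : V) : V := \col_i partial i f x.
Definition hess (f : V -> R) (x : V) : 'M[R]_d :=
  \matrix_(i, j) partial i (partial j f) x.

Definition twice_differentiable (f : V -> R) : Prop :=
  (forall x, differentiable f x) /\ (forall j x, differentiable (partial j f) x).

Variable M : nat. (* total number of samples, M = N * B *)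

Definition fullL (l : 'I_M -> V -> R) : V -> R :=
  fun x => (M%:R)^-1 * \sum_(s < M) l s x.

(* mini-batch loss L^(k) (samples 0-indexed: batch k is r in [kB, kB+B)) *)
Definition batchL (B : nat) (l : 'I_M -> V -> R) (pi : 'S_M) (k : nat) : V -> R :=
  fun x => (B%:R)^-1 * \sum_(r < M | (k * B <= r)%N && (r < k * B + B)%N) l (pi r) x.

Definition Sigma (l : 'I_M -> V -> R) (x : V) : 'M[R]_d :=
  \matrix_(i, j) ((M%:R)^-1 * \sum_(p < M)
     partial i (fun y => l p y - fullL l y) x * partial j (fun y => l p y - fullL l y) x).

Definition trSigma (l : 'I_M -> V -> R) : V -> R := fun x => \tr (Sigma l x).

Definition Epi (F : 'S_M -> V) : V := ((M`!)%:R)^-1 *: \sum_(pi : 'S_M) F pi.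

End Defs.

(* second memoryless iteration coefficient of mini-batch heavy-ball momentum *)
Definition c2 (R : realType) (d : nat) (beta : R) (n B : nat)
    (l : 'I_(n.+1 * B) -> 'cV[R]_d -> R) (pi : 'S_(n.+1 * B)) (x : 'cV[R]_d) : 'cV[R]_d :=
  - beta *: \sum_(0 <= b < n) (beta ^+ b *:
      \sum_(1 <= l' < b.+2) \sum_(0 <= b' < (n - l').+1) (beta ^+ b' *:
         (hess (batchL B l pi (n - 1 - b)) x *m grad (batchL B l pi (n - l' - b')) x))).

Definition alpha_eq (R : realType) (beta : R) (n : nat) : R :=
  - (beta * (1 - beta ^+ n * (1 + beta) + beta ^+ (2 * n + 1)))
    / ((1 - beta) ^+ 2 * (1 + beta)).

Definition alpha_ne (R : realType) (beta : R) (n : nat) : R :=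
  (- 2 * beta ^+ 2 + 2 * n%:R * (1 - beta ^+ 2) * beta ^+ n.+1 + 2 * beta ^+ (2 * n + 2))
    / ((1 - beta) ^+ 3 * (1 + beta)).

(* Main.v *)
Require Import Defs.
From HB Require Import structures.
From mathcomp Require Import all_boot all_order all_algebra all_fingroup.
From mathcomp Require Import all_classical all_reals all_analysis.
From mathcomp Require Import ring lra zify.
Import Order.TTheory GRing.Theory Num.Theory.
Import numFieldNormedType.Exports.
Local Open Scope ring_scope.
Set Implicit Arguments. Unset Strict Implicit.
Section Calc.
Variables (R : realType) (d : nat).
Notation V := 'cV[R]_d.
Definition ev (i : 'I_d) : V := delta_mx i 0.

Lemma isd_sum (I : Type) (s : seq I) (P : pred I) (f : I -> V -> R) (df : I -> R) (x v : V) :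
  (forall r, is_derive x v (f r) (df r)) ->
  is_derive x v (fun y => \sum_(r <- s | P r) f r y) (\sum_(r <- s | P r) df r).
Proof.
move=> hf; elim: s => [|r s IH].
  rewrite big_nil; under [fun y => _]funext do rewrite big_nil.
  exact: is_derive_cst.
rewrite big_cons; under [fun y => _]funext do rewrite big_cons.
case: (P r) => //.
exact: (is_deriveD (hf r) IH).
Qed.

Lemma isd_cmul (f : V -> R) c df x v : is_derive x v f df ->
  is_derive x v (fun y => c * f y) (c * df).
Proof. move=> h; exact: (is_deriveZ c h). Qed.

Lemma isd_sub (f g : V -> R) df dg x v : is_derive x v f df -> is_derive x v g dg ->
  is_derive x v (fun y => f y - g y) (df - dg).
Proof. move=> h1 h2; exact: (is_deriveB h1 h2). Qed.

Lemma isd_mul (f g : V -> R) df dg x v : is_derive x v f df -> is_derive x v g dg ->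
  is_derive x v (fun y => f y * g y) (f x * dg + g x * df).
Proof. move=> h1 h2; exact: (is_deriveM h1 h2). Qed.

Lemma partial_isd (f : V -> R) i x : differentiable f x -> is_derive x (ev i) f (partial i f x).
Proof. by move=> h; apply: derivableP; apply: diff_derivable. Qed.

Lemma partial_eq (f : V -> R) i x df : is_derive x (ev i) f df -> partial i f x = df.
Proof. by move=> h; rewrite /partial; exact: derive_val. Qed.

Lemma partial_csum (I : Type) (s : seq I) (P : pred I) c (f : I -> V -> R) i :
  (forall r x, differentiable (f r) x) ->
  partial i (fun x => c * \sum_(r <- s | P r) f r x) =
  fun x => c * \sum_(r <- s | P r) partial i (f r) x.
Proof.
move=> hf; apply/funext => x; apply: partial_eq.
apply: isd_cmul; apply: isd_sum => r; exact: partial_isd.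
Qed.

Lemma grad_csum (I : Type) (s : seq I) (P : pred I) c (f : I -> V -> R) x :
  (forall r x, differentiable (f r) x) ->
  grad (fun x => c * \sum_(r <- s | P r) f r x) x = c *: \sum_(r <- s | P r) grad (f r) x.
Proof.
move=> hf; apply/matrixP => i j; rewrite !mxE partial_csum // summxE.
by congr (_ * _); apply: eq_bigr => r _; rewrite mxE.
Qed.

Lemma hess_csum (I : Type) (s : seq I) (P : pred I) c (f : I -> V -> R) x :
  (forall r x, differentiable (f r) x) ->
  (forall r j x, differentiable (partial j (f r)) x) ->
  hess (fun x => c * \sum_(r <- s | P r) f r x) x = c *: \sum_(r <- s | P r) hess (f r) x.
Proof.
move=> hf hf2; apply/matrixP => i j; rewrite !mxE partial_csum // partial_csum // summxE.
by congr (_ * _); apply: eq_bigr => r _; rewrite mxE.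
Qed.

Section Tr.
Variables (M : nat) (l : 'I_M -> V -> R).
Hypothesis hl : forall s, twice_differentiable (l s).

Lemma hl1 s x : differentiable (l s) x. Proof. by case: (hl s). Qed.
Lemma hl2 s j x : differentiable (partial j (l s)) x. Proof. by case: (hl s). Qed.

Definition uu (p : 'I_M) (i : 'I_d) : V -> R :=
  fun y => partial i (l p) y - (M%:R)^-1 * \sum_(s < M) partial i (l s) y.

Lemma u_eq p i : partial i (fun y => l p y - fullL l y) = uu p i.
Proof.
apply/funext => x; apply: partial_eq; apply: isd_sub; first exact: partial_isd (hl1 _ _).
apply: isd_cmul; apply: isd_sum => r; exact: partial_isd (hl1 _ _).
Qed.

Lemma tr_eq : trSigma l = fun x => \sum_i ((M%:R)^-1 * \sum_p (uu p i x * uu p i x)).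
Proof.
apply/funext => x; rewrite /trSigma /mxtrace; apply: eq_bigr => i _.
by rewrite mxE; under eq_bigr do rewrite u_eq.
Qed.

Lemma grad_full x : grad (fullL l) x = (M%:R)^-1 *: \sum_s grad (l s) x.
Proof. by rewrite /fullL grad_csum //; exact: hl1. Qed.
Lemma hess_full x : hess (fullL l) x = (M%:R)^-1 *: \sum_s hess (l s) x.
Proof. by rewrite /fullL hess_csum //; [exact: hl1|exact: hl2]. Qed.

Lemma grad_tr x : grad (trSigma l) x = 2 *: ((M%:R)^-1 *:
   \sum_p ((hess (l p) x - hess (fullL l) x) *m (grad (l p) x - grad (fullL l) x))).
Proof.
apply/matrixP => k j; rewrite !mxE tr_eq.
have du : forall p i, is_derive x (ev k) (uu p i)
   (partial k (partial i (l p)) x - (M%:R)^-1 * \sum_s partial k (partial i (l s)) x).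
  move=> p i; apply: isd_sub; first exact: partial_isd (hl2 _ _ _).
  apply: isd_cmul; apply: isd_sum => r; exact: partial_isd (hl2 _ _ _).
have h : is_derive x (ev k) (fun y => \sum_i ((M%:R)^-1 * \sum_p (uu p i y * uu p i y)))
  (\sum_i ((M%:R)^-1 * \sum_p (uu p i x * (partial k (partial i (l p)) x - (M%:R)^-1 * \sum_s partial k (partial i (l s)) x) + uu p i x * (partial k (partial i (l p)) x - (M%:R)^-1 * \sum_s partial k (partial i (l s)) x)))).
  apply: isd_sum => i; apply: isd_cmul; apply: isd_sum => p; exact: isd_mul (du p i) (du p i).
rewrite (partial_eq h) grad_full hess_full summxE.
under [in RHS]eq_bigr do rewrite !mxE.
rewrite [in RHS](exchange_big) /= !mulr_sumr; apply: eq_bigr => i _.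
rewrite !mulr_sumr; apply: eq_bigr => p _.
rewrite /uu !mxE !summxE.
under [X in _ = 2 * (_ * ((_ - _ * X) * _))]eq_bigr do rewrite mxE.
under [X in _ = 2 * (_ * (_ * (_ - _ * X)))]eq_bigr do rewrite mxE.
rewrite -!mulr_sumr; ring.
Qed.
End Tr.
End Calc.
Section Perm.
Variables (R : realType) (d M : nat).
Variables (Hs : 'I_M -> 'M[R]_d) (gs : 'I_M -> 'cV[R]_d).
Definition FF (s t : 'I_M) := Hs s *m gs t.
Definition SS (r r' : 'I_M) := \sum_(pi : 'S_M) FF (pi r) (pi r').

Lemma SS_inv (sg : 'S_M) r r' : SS (sg r) (sg r') = SS r r'.
Proof.
rewrite /SS [RHS](reindex_inj (mulgI sg)) /=.
by apply: eq_bigr => pi _; rewrite !permM.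
Qed.

Lemma sum_perm_const (v : 'cV[R]_d) : \sum_(pi : 'S_M) v = (M`!)%:R *: v.
Proof. by rewrite sumr_const card_Sn scaler_nat. Qed.

Lemma SS_sum_diag : \sum_q SS q q = (M`!)%:R *: \sum_s FF s s.
Proof.
rewrite /SS exchange_big /= -sum_perm_const; apply: eq_bigr => pi _.
by rewrite [RHS](reindex_inj (@perm_inj _ pi)).
Qed.

Lemma SS_sum_all : \sum_q \sum_q' SS q q' = (M`!)%:R *: \sum_s \sum_t FF s t.
Proof.
rewrite /SS.
under eq_bigr do rewrite exchange_big /=.
rewrite exchange_big /= -sum_perm_const; apply: eq_bigr => pi _.
rewrite [RHS](reindex_inj (@perm_inj _ pi)); apply: eq_bigr => s _.
by rewrite [RHS](reindex_inj (@perm_inj _ pi)).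
Qed.

Lemma SS_diag r : (M%:R) *: SS r r = (M`!)%:R *: \sum_s FF s s.
Proof.
rewrite -SS_sum_diag.
have -> : \sum_q SS q q = \sum_(q : 'I_M) SS r r.
  apply: eq_bigr => q _; by rewrite -(SS_inv (tperm r q) r r) tpermL.
by rewrite sumr_const card_ord scaler_nat.
Qed.

Lemma trans2 (r r' q q' : 'I_M) : r != r' -> q != q' ->
  exists sg : 'S_M, sg r = q /\ sg r' = q'.
Proof.
move=> hr hq; exists (tperm r q * tperm (tperm r q r') q')%g.
rewrite !permM tpermL; split; last by rewrite tpermL.
rewrite (@tpermD _ (tperm r q r') q' q) //; last by rewrite eq_sym.
by rewrite -[X in _ != X](tpermL r q) (inj_eq perm_inj) eq_sym.
Qed.

Lemma SS_off r r' : r != r' ->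
  ((M * M.-1)%:R) *: SS r r' = (M`!)%:R *: (\sum_s \sum_t FF s t - \sum_s FF s s).
Proof.
move=> hr; rewrite scalerBr -SS_sum_all -SS_sum_diag -sumrB.
have -> : \sum_(q : 'I_M) (\sum_q' SS q q' - SS q q) = \sum_(q : 'I_M) (M.-1)%:R *: SS r r'.
  apply: eq_bigr => q _.
  rewrite (bigD1 q) //= addrAC subrr add0r.
  have -> : \sum_(q' | q' != q) SS q q' = \sum_(q' | q' != q) SS r r'.
    apply: eq_bigr => q' hq'.
    have hq : q != q' by rewrite eq_sym.
    have [sg [h1 h2]] := trans2 hr hq.
    by rewrite -h1 -h2 SS_inv.
  by rewrite sumr_const cardC1 card_ord scaler_nat.
by rewrite sumr_const card_ord scalerMnl natrM mulrC mulr_natr.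
Qed.
Definition Dg : 'cV[R]_d := (M%:R)^-1 *: \sum_s FF s s.
Definition Of : 'cV[R]_d := ((M * M.-1)%:R)^-1 *: (\sum_s \sum_t FF s t - \sum_s FF s s).

Lemma E_val (hM : (1 < M)%N) r r' :
  ((M`!)%:R)^-1 *: SS r r' = Of + ((r == r')%:R : R) *: (Dg - Of).
Proof.
have hF : (M`!)%:R != 0 :> R by rewrite pnatr_eq0 -lt0n fact_gt0.
case: eqP => [<-|/eqP hr].
  rewrite scale1r addrC subrK /Dg.
  have hMn : M%:R != 0 :> R by rewrite pnatr_eq0 -lt0n; apply: ltnW.
  rewrite -[SS r r](scalerK hMn) SS_diag !scalerA; congr (_ *: _).
  by rewrite mulrAC mulVf // mul1r.
rewrite (_ : (false%:R : R) = 0) // scale0r addr0 /Of.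
have hMn : (M * M.-1)%:R != 0 :> R.
  rewrite pnatr_eq0 -lt0n muln_gt0; apply/andP; split; [exact: ltnW | by rewrite -subn1 subn_gt0].
by rewrite -[SS r r'](scalerK hMn) (SS_off hr) !scalerA mulrAC mulVf // mul1r.
Qed.

Lemma batch_exp (hM : (1 < M)%N) (Pa Pc : pred 'I_M) (cA cB : R) :
  ((M`!)%:R)^-1 *: \sum_(pi : 'S_M)
     ((cA *: \sum_(r | Pa r) Hs (pi r)) *m (cB *: \sum_(r | Pc r) gs (pi r))) =
  (cA * cB) *: ((\sum_(r | Pa r) \sum_(r' | Pc r') (1 : R)) *: Of +
      (\sum_(r | Pa r) \sum_(r' | Pc r') ((r == r')%:R : R)) *: (Dg - Of)).
Proof.
have -> : \sum_(pi : 'S_M) ((cA *: \sum_(r | Pa r) Hs (pi r)) *m (cB *: \sum_(r | Pc r) gs (pi r)))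
   = (cA * cB) *: \sum_(r | Pa r) \sum_(r' | Pc r') SS r r'.
  have h1 : forall pi : 'S_M, (cA *: \sum_(r | Pa r) Hs (pi r)) *m (cB *: \sum_(r | Pc r) gs (pi r))
      = (cA * cB) *: \sum_(r | Pa r) \sum_(r' | Pc r') FF (pi r) (pi r').
    move=> pi; rewrite -scalemxAl -scalemxAr scalerA mulmx_suml; congr (_ *: _).
    by apply: eq_bigr => r _; rewrite mulmx_sumr.
  under eq_bigr do rewrite h1.
  rewrite -scaler_sumr /SS; congr (_ *: _).
  rewrite exchange_big /=; apply: eq_bigr => r _.
  by rewrite exchange_big.
rewrite scalerA [(M`!%:R)^-1 * _]mulrC -[in LHS]scalerA; congr (_ *: _).
rewrite scaler_sumr !scaler_suml -big_split /=; apply: eq_bigr => r _.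
rewrite scaler_sumr !scaler_suml -big_split /=; apply: eq_bigr => r' _.
rewrite E_val //; congr (_ + _); exact: (esym (scale1r _)).
Qed.
End Perm.
Section Scal.
Variables (R : realType) (be : R).
Definition G (m : nat) : R := \sum_(0 <= j < m.+1) be ^+ j.

Lemma geomG m : (1 - be) * G m = 1 - be ^+ m.+1.
Proof.
elim: m => [|m IH]; first by rewrite /G big_nat1 expr0 expr1 mulr1.
rewrite /G big_nat_recr //= -/(G m) mulrDr IH !exprS; ring.
Qed.

Lemma L1 b : \sum_(1 <= l < b.+2) be ^+ (b.+1 - l) = G b.
Proof.
elim: b => [|b IH]; first by rewrite big_nat1 /G big_nat1.
rewrite [RHS]/G [RHS]big_nat_recr //= -/(G b) -IH big_nat_recl // subn1 /= addrC.
congr (_ + _); apply: eq_big_nat => l hl; by rewrite subSS.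
Qed.


Lemma pick_sum m k (F : nat -> R) : (k < m)%N ->
  \sum_(0 <= j < m) F j * ((k == j)%:R : R) = F k.
Proof.
elim: m => [|m IH] hk //.
rewrite big_nat_recr //=.
case: (ltnP k m) => hkm.
  rewrite IH // (_ : (k == m) = false) ?mulr0 ?addr0 //; apply/eqP; lia.
have -> : k = m by lia.
rewrite eqxx mulr1 big1_seq ?add0r // => j; rewrite mem_iota => /andP [_ hj].
rewrite (_ : (m == j) = false) ?mulr0 //; apply/eqP; lia.
Qed.
Definition S1 n : R := \sum_(0 <= b < n) (b.+1)%:R * be ^+ b.
Definition S3 n : R := \sum_(0 <= b < n) be ^+ b * G b.

Lemma S1_closed n : S1 n * (1 - be) ^+ 2 = 1 - (n.+1)%:R * be ^+ n + n%:R * be ^+ n.+1.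
Proof.
elim: n => [|n IH]; first by rewrite /S1 big_nil expr0 expr1; ring.
rewrite /S1 big_nat_recr //= -/(S1 n) mulrDl IH.
rewrite !exprS -!natr1; ring.
Qed.
Lemma S3_closed n : S3 n * ((1 - be) ^+ 2 * (1 + be)) =
  1 - be ^+ n - be ^+ n.+1 + be ^+ (2 * n + 1).
Proof.
elim: n => [|n IH]; first by rewrite /S3 big_nil muln0 add0n !expr0 expr1; ring.
rewrite /S3 big_nat_recr //= -/(S3 n) mulrDl IH.
have hK : G n * ((1 - be) ^+ 2 * (1 + be)) = (1 - be) * (1 + be) * (1 - be ^+ n.+1).
  rewrite -geomG; ring.
rewrite -mulrA hK.
rewrite (_ : be ^+ (2 * n.+1 + 1) = be ^+ n * be ^+ n * be ^+ 3); last first.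
  by rewrite -!exprD; congr (_ ^+ _); lia.
rewrite (_ : be ^+ (2 * n + 1) = be ^+ n * be ^+ n * be ^+ 1); last first.
  by rewrite -!exprD; congr (_ ^+ _); lia.
rewrite !exprS expr0; ring.
Qed.
Definition S2 n : R := \sum_(0 <= b < n) G b.
Lemma S2_closed n : S2 n * (1 - be) ^+ 2 = n%:R * (1 - be) - be + be ^+ n.+1.
Proof.
elim: n => [|n IH]; first by rewrite /S2 big_nil expr1; ring.
rewrite /S2 big_nat_recr //= -/(S2 n) mulrDl IH.
have h := geomG n.
rewrite (_ : G n * (1 - be) ^+ 2 = (1 - be) * ((1 - be) * G n)); last by ring.
rewrite h !exprS -!natr1; ring.
Qed.

Definition Tsum n : R := \sum_(0 <= b < n) be ^+ b * \sum_(1 <= l < b.+2) G (n - l).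

Lemma T_eq n : (1 - be) * Tsum n = S1 n - be ^+ n * S2 n.
Proof.
rewrite /Tsum /S1 /S2 (mulr_sumr _ _ _ (1 - be)) (mulr_sumr _ _ _ (be ^+ n)) -sumrB.
apply: eq_big_nat => b /andP [_ hb].
have e1 : (1 - be) * \sum_(1 <= l < b.+2) G (n - l) = (b.+1)%:R - \sum_(1 <= l < b.+2) be ^+ (n - l).+1.
  rewrite mulr_sumr (eq_bigr _ (fun l _ => geomG (n - l))) sumrB sumr_const_nat subn1 //.
have e2 : be ^+ b * \sum_(1 <= l < b.+2) be ^+ (n - l).+1 = be ^+ n * G b.
  rewrite -L1 !mulr_sumr; apply: eq_big_nat => l /andP [hl1 hl2]; rewrite -!exprD; congr (_ ^+ _); lia.
rewrite mulrCA e1 mulrBr e2; ring.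
Qed.
Hypothesis hbe : 0 < be < 1.
Lemma ne1 : 1 - be != 0. Proof. case/andP: hbe => h1 h2; lra. Qed.
Lemma ne2 : 1 + be != 0. Proof. case/andP: hbe => h1 h2; lra. Qed.

Lemma exE n : be ^+ (2 * n + 1) = be ^+ n * be ^+ n * be ^+ 1 /\ be ^+ (2 * n + 2) = be ^+ n * be ^+ n * be ^+ 2.
Proof.
split; rewrite -!exprD; congr (_ ^+ _); lia.
Qed.

Lemma A1 n : alpha_eq be n = - be * S3 n.
Proof.
have h := S3_closed n.
have hk : (1 - be) ^+ 2 * (1 + be) != 0 by rewrite mulf_neq0 ?expf_neq0 ?ne1 ?ne2.
rewrite (_ : S3 n = (1 - be ^+ n - be ^+ n.+1 + be ^+ (2 * n + 1)) / ((1 - be) ^+ 2 * (1 + be))); last first.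
  by rewrite -h mulfK.
rewrite /alpha_eq; case: (exE n) => -> _; rewrite !exprS expr0.
field; rewrite ?ne1 ?ne2 //.
Qed.
Lemma A2 n : alpha_eq be n + alpha_ne be n = - be * Tsum n.
Proof.
have hk : (1 - be) ^+ 2 != 0 by rewrite expf_neq0 ?ne1.
rewrite (_ : Tsum n = (S1 n - be ^+ n * S2 n) / (1 - be)); last first.
  by rewrite -T_eq [_ * Tsum n]mulrC mulfK ?ne1.
rewrite (_ : S1 n = (1 - (n.+1)%:R * be ^+ n + n%:R * be ^+ n.+1) / (1 - be) ^+ 2); last first.
  by rewrite -S1_closed mulfK.
rewrite (_ : S2 n = (n%:R * (1 - be) - be + be ^+ n.+1) / (1 - be) ^+ 2); last first.
  by rewrite -S2_closed mulfK.
rewrite /alpha_eq /alpha_ne; case: (exE n) => -> ->; rewrite !exprS expr0 -!natr1.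
field; rewrite ?ne1 ?ne2 //.
Qed.
Lemma S3'_eq n : \sum_(0 <= b < n) be ^+ b * \sum_(1 <= l < b.+2) \sum_(0 <= b' < (n - l).+1)
   be ^+ b' * ((n - 1 - b == n - l - b')%N%:R : R) = S3 n.
Proof.
apply: eq_big_nat => b /andP [_ hb]; congr (_ * _); rewrite -L1.
apply: eq_big_nat => l /andP [hl1 hl2].
rewrite -(@pick_sum (n - l).+1 (b.+1 - l) (fun j => be ^+ j)); last by lia.
apply: eq_big_nat => b' /andP [_ hb']; congr (_ * (_ %:R)).
by apply/eqP/eqP; lia.
Qed.
End Scal.
Section Asm.
Variables (R : realType) (d : nat).
Notation V := 'cV[R]_d.

Lemma sum_cond_false m k (P : pred nat) (F : nat -> R) :
  (forall i, (m <= i < k)%N -> P i = false) -> \sum_(m <= i < k | P i) F i = 0.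
Proof.
move=> h; rewrite big_nat_cond big_pred0 // => i /=.
case: (boolP (m <= i < k)%N) => hi //=; exact: h.
Qed.

Lemma sum_cond_true m k (P : pred nat) (F : nat -> R) :
  (forall i, (m <= i < k)%N -> P i = true) -> \sum_(m <= i < k | P i) F i = \sum_(m <= i < k) F i.
Proof.
move=> h; rewrite big_nat_cond [RHS]big_nat_cond; apply: eq_bigl => i /=.
case: (boolP (m <= i < k)%N) => hi //=; rewrite ?andbT; exact: h.
Qed.

Lemma count_batch (N B a : nat) : (a < N)%N ->
  \sum_(r < N * B | (a * B <= r)%N && (r < a * B + B)%N) (1 : R) = B%:R.
Proof.
move=> ha.
rewrite -(big_mkord (fun r => (a * B <= r)%N && (r < a * B + B)%N) (fun _ => (1 : R))).
have hle : (a * B + B <= N * B)%N by rewrite addnC -mulSn leq_mul2r ha orbT.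
rewrite (@big_cat_nat _ _ _ (a * B)) //=; last exact: leq_trans (leq_addr _ _) hle.
rewrite (@big_cat_nat _ _ _ (a * B + B) (a * B) (N * B)) //= ?leq_addr //.
rewrite sum_cond_false; last by move=> i /andP [_ h]; apply/negbTE/negP => /andP [h1 _]; lia.
rewrite [X in _ + (_ + X)]sum_cond_false; last by move=> i /andP [h _]; apply/negbTE/negP => /andP [_ h1]; lia.
rewrite sum_cond_true; last by move=> i /andP [h1 h2]; apply/andP.
by rewrite sumr_const_nat add0r addr0 addKn.
Qed.

Lemma vec_sum3 (be : R) (n : nat) (X Y : V) (w : nat -> nat -> nat -> R) :
  \sum_(0 <= b < n) (be ^+ b *: \sum_(1 <= l < b.+2) \sum_(0 <= b' < (n - l).+1)
      (be ^+ b' *: (X + w b l b' *: Y))) =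
  (\sum_(0 <= b < n) be ^+ b * \sum_(1 <= l < b.+2) \sum_(0 <= b' < (n - l).+1) be ^+ b') *: X +
  (\sum_(0 <= b < n) be ^+ b * \sum_(1 <= l < b.+2) \sum_(0 <= b' < (n - l).+1) (be ^+ b' * w b l b')) *: Y.
Proof.
rewrite !scaler_suml -big_split /=; apply: eq_bigr => b _.
rewrite -!scalerA -scalerDr; congr (_ *: _).
rewrite !scaler_suml -big_split /=; apply: eq_bigr => l _.
rewrite !scaler_suml -big_split /=; apply: eq_bigr => b' _.
by rewrite scalerDr scalerA.
Qed.

Lemma scZC (a b : R) (v : V) : a *: (b *: v) = b *: (a *: v).
Proof. by rewrite !scalerA mulrC. Qed.

Lemma Epi3 (M : nat) (c be : R) (n : nat) (Q : nat -> nat -> nat -> 'S_M -> V) :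
  Epi (fun pi => c *: \sum_(0 <= b < n) (be ^+ b *: \sum_(1 <= l < b.+2)
        \sum_(0 <= b' < (n - l).+1) (be ^+ b' *: Q b l b' pi)))
  = c *: \sum_(0 <= b < n) (be ^+ b *: \sum_(1 <= l < b.+2)
        \sum_(0 <= b' < (n - l).+1) (be ^+ b' *: Epi (Q b l b'))).
Proof.
rewrite /Epi -scaler_sumr scalerA mulrC -scalerA; congr (c *: _).
rewrite exchange_big scaler_sumr; apply: eq_bigr => b _.
rewrite -scaler_sumr scZC; congr (_ *: _).
rewrite exchange_big scaler_sumr; apply: eq_bigr => l _.
rewrite exchange_big scaler_sumr; apply: eq_bigr => b' _.
by rewrite -scaler_sumr scZC.
Qed.

Lemma hess_batch (M B : nat) (l : 'I_M -> V -> R) pi k x :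
  (forall s, twice_differentiable (l s)) ->
  hess (batchL B l pi k) x = (B%:R)^-1 *: \sum_(r < M | (k * B <= r)%N && (r < k * B + B)%N) hess (l (pi r)) x.
Proof.
move=> hl; rewrite /batchL hess_csum // => r y; [by case: (hl (pi r)) | by case: (hl (pi r))].
Qed.

Lemma grad_batch (M B : nat) (l : 'I_M -> V -> R) pi k x :
  (forall s, twice_differentiable (l s)) ->
  grad (batchL B l pi k) x = (B%:R)^-1 *: \sum_(r < M | (k * B <= r)%N && (r < k * B + B)%N) grad (l (pi r)) x.
Proof.
move=> hl; rewrite /batchL grad_csum // => r y; by case: (hl (pi r)).
Qed.

Lemma cnt1 (N B a c : nat) : (a < N)%N -> (c < N)%N ->
  \sum_(r < N * B | (a * B <= r)%N && (r < a * B + B)%N)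
    \sum_(r' < N * B | (c * B <= r')%N && (r' < c * B + B)%N) (1 : R) = B%:R * B%:R.
Proof.
move=> ha hc; under eq_bigr do rewrite count_batch //.
rewrite -(count_batch B ha) mulr_sumr; apply: eq_bigr => r _; by rewrite mulr1.
Qed.

Lemma cnt2 (N B a c : nat) : (a < N)%N -> (c < N)%N ->
  \sum_(r < N * B | (a * B <= r)%N && (r < a * B + B)%N)
    \sum_(r' < N * B | (c * B <= r')%N && (r' < c * B + B)%N) ((r == r')%:R : R) = (a == c)%:R * B%:R.
Proof.
move=> ha hc.
have -> : \sum_(r < N * B | (a * B <= r)%N && (r < a * B + B)%N)
    \sum_(r' < N * B | (c * B <= r')%N && (r' < c * B + B)%N) ((r == r')%:R : R) =
    \sum_(r < N * B | (a * B <= r)%N && (r < a * B + B)%N) ((a == c)%:R : R).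
  apply: eq_bigr => r /andP [hr1 hr2].
  case: eqP => [eac|nac].
    subst c; rewrite (bigD1 r) /=; last by rewrite hr1 hr2.
    rewrite eqxx big1 ?addr0 // => r' /andP [_ hne]; rewrite eq_sym.
    by rewrite (negbTE hne).
  rewrite big1 // => r' /andP [h1 h2].
  case: eqP => [er|] //; subst r'; exfalso; apply: nac.
  have hB : (0 < B)%N by lia.
  have e1 : (a < c.+1)%N.
    have : (a * B < c.+1 * B)%N by rewrite mulSn; lia.
    by rewrite ltn_pmul2r.
  have e2 : (c < a.+1)%N.
    have : (c * B < a.+1 * B)%N by rewrite mulSn; lia.
    by rewrite ltn_pmul2r.
  apply/eqP; rewrite eqn_leq -ltnS e1 -ltnS e2 //.
rewrite -(count_batch B ha) mulr_sumr; apply: eq_bigr => r _; by rewrite mulr1.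
Qed.
Lemma EB (N B a c : nat) (Hs : 'I_(N * B) -> 'M[R]_d) (gs : 'I_(N * B) -> V) :
  (1 < N * B)%N -> (a < N)%N -> (c < N)%N ->
  (((N * B)`!)%:R)^-1 *: \sum_(pi : 'S_(N * B))
     (((B%:R)^-1 *: \sum_(r < N * B | (a * B <= r)%N && (r < a * B + B)%N) Hs (pi r)) *m
      ((B%:R)^-1 *: \sum_(r < N * B | (c * B <= r)%N && (r < c * B + B)%N) gs (pi r))) =
  Of Hs gs + ((a == c)%:R : R) *: ((B%:R)^-1 *: (Dg Hs gs - Of Hs gs)).
Proof.
move=> hM ha hc.
have hB : B%:R != 0 :> R.
  rewrite pnatr_eq0 -lt0n; move: hM; case: (B) => //; by rewrite muln0.
rewrite batch_exp // cnt1 // cnt2 //.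
move: (Of Hs gs) (Dg Hs gs) => O D.
by apply/matrixP => i j; rewrite !mxE; field.
Qed.

Lemma centered (M : nat) (A : 'I_M -> 'M[R]_d) (v : 'I_M -> V) A0 v0 :
  (M%:R != 0 :> R) -> \sum_p A p = M%:R *: A0 -> \sum_p v p = M%:R *: v0 ->
  (M%:R)^-1 *: \sum_p ((A p - A0) *m (v p - v0)) = (M%:R)^-1 *: \sum_p (A p *m v p) - A0 *m v0.
Proof.
move=> hM hA hv.
have ex : \sum_p ((A p - A0) *m (v p - v0)) =
   \sum_p (A p *m v p) - \sum_p (A p *m v0) - \sum_p (A0 *m v p) + \sum_(p < M) (A0 *m v0).
  rewrite -!sumrB -big_split /=; apply: eq_bigr => p _.
  by rewrite mulmxBl !mulmxBr opprB addrA addrAC.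
rewrite ex -mulmx_suml -mulmx_sumr hA hv sumr_const card_ord -[(A0 *m v0) *+ M]scaler_nat.
rewrite -scalemxAl -scalemxAr.
move: (A0 *m v0) (\sum_p (A p *m v p)) => P S.
by apply/matrixP => i j; rewrite !mxE; field.
Qed.
Lemma EB' (N B a c : nat) (Hs : 'I_(N * B) -> 'M[R]_d) (gs : 'I_(N * B) -> V) :
  (1 < N * B)%N -> (a < N)%N -> (c < N)%N ->
  Epi (fun pi : 'S_(N * B) =>
     (((B%:R)^-1 *: \sum_(r < N * B | (a * B <= r)%N && (r < a * B + B)%N) Hs (pi r)) *m
      ((B%:R)^-1 *: \sum_(r < N * B | (c * B <= r)%N && (r < c * B + B)%N) gs (pi r)))) =
  Of Hs gs + ((a == c)%:R : R) *: ((B%:R)^-1 *: (Dg Hs gs - Of Hs gs)).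
Proof. by move=> *; rewrite /Epi EB. Qed.

Lemma subsub_le n x y : (n - x - y < n.+1)%N.
Proof. lia. Qed.

Lemma part1 (beta : R) (hbeta : 0 < beta < 1) (n B : nat) (hn : (1 <= n)%N) (hB : (1 <= B <= n.+1)%N)
  (l : 'I_(n.+1 * B) -> V -> R) (hl : forall s, twice_differentiable (l s)) (theta : V) :
  Epi (fun pi => c2 beta l pi theta) =
     (alpha_eq beta n + alpha_ne beta n) *:
        (hess (fullL l) theta *m grad (fullL l) theta)
     + (alpha_eq beta n * n%:R / (2 * ((n.+1 * B)%:R - 1))
        - alpha_ne beta n / (2 * ((n.+1 * B)%:R - 1))) *:
        grad (trSigma l) theta.
Proof.
have hM : (1 < n.+1 * B)%N by case/andP: hB => hB1 _; nia.
have e1 : (fun pi => c2 beta l pi theta) = (fun pi => -beta *: \sum_(0 <= b < n) (beta ^+ b *: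
     \sum_(1 <= l' < b.+2) \sum_(0 <= b' < (n - l').+1) (beta ^+ b' *:
      (((B%:R)^-1 *: \sum_(r < n.+1 * B | ((n - 1 - b) * B <= r)%N && (r < (n - 1 - b) * B + B)%N) hess (l (pi r)) theta) *m
       ((B%:R)^-1 *: \sum_(r < n.+1 * B | ((n - l' - b') * B <= r)%N && (r < (n - l' - b') * B + B)%N) grad (l (pi r)) theta))))).
  apply/funext => pi; rewrite /c2; congr (_ *: _); apply: eq_bigr => b _; congr (_ *: _).
  apply: eq_bigr => l' _; apply: eq_bigr => b' _.
  by rewrite hess_batch // grad_batch.
rewrite e1 Epi3.
under eq_bigr => b _ do under eq_bigr => l' _ do under eq_bigr => b' _ do rewrite (EB' (fun s => hess (l s) theta) (fun s => grad (l s) theta) hM (subsub_le _ _ _) (subsub_le _ _ _)).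
rewrite vec_sum3 (S3'_eq hbeta).
rewrite (_ : \sum_(0 <= b < n) beta ^+ b * \sum_(1 <= l0 < b.+2) \sum_(0 <= b' < (n - l0).+1) beta ^+ b'
    = Tsum beta n) //.
have hA2 := A2 hbeta n; have hA1 := A1 hbeta n.
rewrite (_ : alpha_ne beta n = - beta * Tsum beta n - alpha_eq beta n); last first.
  by rewrite -hA2 addrAC subrr add0r.
rewrite hA1 grad_tr //.
have hMn : (n.+1 * B)%:R != 0 :> R by rewrite pnatr_eq0 -lt0n; apply: ltnW.
rewrite (@centered _ (fun s => hess (l s) theta) (fun s => grad (l s) theta)) //; first last.
- by rewrite grad_full // scalerA mulfV // scale1r.
- by rewrite hess_full // scalerA mulfV // scale1r.
rewrite /Of /Dg /FF.
rewrite (_ : \sum_s \sum_t hess (l s) theta *m grad (l t) theta =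
   (\sum_s hess (l s) theta) *m (\sum_t grad (l t) theta)); last first.
  by rewrite mulmx_suml; apply: eq_bigr => s _; rewrite mulmx_sumr.
have hH : \sum_s hess (l s) theta = (n.+1 * B)%:R *: hess (fullL l) theta.
  by rewrite hess_full // scalerA mulfV // scale1r.
have hG : \sum_s grad (l s) theta = (n.+1 * B)%:R *: grad (fullL l) theta.
  by rewrite grad_full // scalerA mulfV // scale1r.
rewrite hH hG.
move: (hess (fullL l) theta) (grad (fullL l) theta) (\sum_s hess (l s) theta *m grad (l s) theta) => Hf gf SD.
rewrite -scalemxAl -scalemxAr.
move: (Hf *m gf) => P.
have hp : ((n.+1 * B).-1)%:R = (n.+1 * B)%:R - 1 :> R.
  by apply/eqP; rewrite eq_sym subr_eq natr1 prednK // ltnW.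
rewrite natrM hp natrM -[(n.+1)%:R]natr1.
have hB0 : B%:R != 0 :> R by rewrite pnatr_eq0 -lt0n; case/andP: hB.
have hN0 : n%:R + 1 != 0 :> R by rewrite natr1 pnatr_eq0.
have hM1 : (n%:R + 1) * B%:R - 1 != 0 :> R.
  rewrite natr1 -natrM -hp pnatr_eq0 -lt0n -subn1 subn_gt0 //.
apply/matrixP => i j; rewrite !mxE.
by field; rewrite hB0 hN0 hM1.
Qed.
End Asm.
Section Lim.
Variables (R : realType) (be : R).
Hypothesis hbe : 0 < be < 1.

Lemma binom (x : R) (n : nat) : 0 <= x ->
  2 + 2 * n%:R * x + n%:R * (n%:R - 1) * x ^+ 2 <= 2 * (1 + x) ^+ n.
Proof.
move=> hx; elim: n => [|n IH]; first by rewrite expr0 mulr0 !mul0r !addr0 mulr1.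
have hn : 0 <= n%:R :> R by apply: ler0n.
have hnn : 0 <= n%:R * (n%:R - 1) :> R.
  case: n {IH hn} => [|n]; first by rewrite mul0r.
  rewrite -natr1 addrK; apply: mulr_ge0; [apply: addr_ge0 => //; exact: ler0n | exact: ler0n].
set t := (1 + x) ^+ n in IH *.
have h1 : 0 <= (1 + x) * (2 * t - (2 + 2 * n%:R * x + n%:R * (n%:R - 1) * x ^+ 2)).
  apply: mulr_ge0; [lra | lra].
have h2 : 0 <= n%:R * (n%:R - 1) * x ^+ 3 by apply: mulr_ge0 => //; apply: exprn_ge0.
rewrite [(1 + x) ^+ n.+1]exprS -/t -[(n.+1)%:R]natr1; lra.
Qed.
Lemma nbeta n : n%:R * (n%:R - 1) * (1 - be) ^+ 2 * be ^+ n <= 2.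
Proof.
case/andP: hbe => hb0 hb1.
have hbn : be != 0 by rewrite gt_eqF.
set x := (1 - be) / be.
have hx : 0 <= x by rewrite /x divr_ge0 //; lra.
have e1 : 1 - be = x * be by rewrite /x mulfVK.
have e2 : (1 + x) ^+ n * be ^+ n = 1.
  rewrite -exprMn (_ : (1 + x) * be = 1) ?expr1n //.
  by rewrite mulrDl mul1r -e1 addrC subrK.
have H := binom n hx.
have hnn : 0 <= n%:R * (n%:R - 1) :> R.
  case: n {H e2} => [|n]; first by rewrite mul0r.
  rewrite -natr1 addrK; apply: mulr_ge0; [apply: addr_ge0 => //; exact: ler0n | exact: ler0n].
have hnx : 0 <= n%:R * x by apply: mulr_ge0 => //; exact: ler0n.
have hp : 0 <= be ^+ n by apply: exprn_ge0; lra.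
set t := (1 + x) ^+ n in H e2.
set A := n%:R * (n%:R - 1) in hnn H *.
rewrite e1.
have h3 : A * x ^+ 2 <= 2 * t by lra.
have h4 : A * x ^+ 2 * (be ^+ 2 * be ^+ n) <= 2 * t * (be ^+ 2 * be ^+ n).
  by apply: ler_wpM2r => //; apply: mulr_ge0 => //; apply: exprn_ge0; lra.
have h5 : be ^+ 2 <= 1 by rewrite expr2; nra.
rewrite (_ : A * (x * be) ^+ 2 * be ^+ n = A * x ^+ 2 * (be ^+ 2 * be ^+ n)); last first.
  by rewrite exprMn !mulrA.
apply: le_trans h4 _.
rewrite (_ : 2 * t * (be ^+ 2 * be ^+ n) = 2 * be ^+ 2 * (t * be ^+ n)); last by ring.
rewrite e2 mulr1; lra.
Qed.
Lemma small (del : R) : 0 < del -> exists n0 : nat, forall n : nat, (n0 <= n)%N ->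
  (1 <= n)%N /\ n%:R * be ^+ n < del /\ (n%:R)^-1 < del.
Proof.
move=> hd; case/andP: hbe => hb0 hb1.
have hc : 0 < (1 - be) ^+ 2 by apply: exprn_gt0; lra.
set K := 2 / (del * (1 - be) ^+ 2) + del^-1.
have hd' : 0 <= del by apply: ltW.
have hQ : 0 <= 2 / (del * (1 - be) ^+ 2).
  by apply: divr_ge0 => //; apply: mulr_ge0 => //; apply: ltW.
have hK : 0 <= K by rewrite /K addr_ge0 // invr_ge0.
have [k hA] : exists k : nat, K < k%:R by exists (Num.Def.archi_bound K); exact: archi_boundP.
exists k.+2 => n hn; split; first by apply: leq_trans hn.
have hnR : k.+2%:R <= n%:R :> R by rewrite ler_nat.
rewrite !mulrS in hnR.
have hn1 : K < n%:R - 1 by lra.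
have hdi : 0 < del^-1 by rewrite invr_gt0.
have h2 : 2 / (del * (1 - be) ^+ 2) < n%:R - 1 by rewrite /K in hn1; lra.
have h3 : del^-1 < n%:R by rewrite /K in hn1; lra.
split.
  have hnb := nbeta n.
  have hpos : 0 < n%:R - 1 :> R by lra.
  have h4 : 2 < (n%:R - 1) * (del * (1 - be) ^+ 2).
    by rewrite -ltr_pdivrMr // mulr_gt0.
  have hp : 0 <= n%:R * be ^+ n by rewrite mulr_ge0 ?ler0n ?exprn_ge0 //; apply: ltW.
  nra.
have hn0 : 0 < n%:R :> R by lra.
rewrite -[_^-1]mul1r ltr_pdivrMr // -ltr_pdivrMl //.
by rewrite mulr1.
Qed.
Definition E1 n : R := alpha_eq be n + alpha_ne be n + be / (1 - be) ^+ 3.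
Definition E2 n B : R := B%:R * (alpha_eq be n * n%:R / (2 * ((n.+1 * B)%:R - 1))
        - alpha_ne be n / (2 * ((n.+1 * B)%:R - 1))) + be / (2 * (1 - be) ^+ 2 * (1 + be)).

Lemma E1_closed n : E1 n = ((2 * n%:R + 1) * (1 - be) * be * be ^+ n + be ^+ 2 * (be ^+ n) ^+ 2) / (1 - be) ^+ 3.
Proof.
have h1 := ne1 hbe; have h2 := ne2 hbe.
rewrite /E1 /alpha_eq /alpha_ne; case: (exE hbe n) => -> ->; rewrite !exprS expr0.
by field; rewrite h1 h2.
Qed.

Lemma E1_bound n : (1 <= n)%N -> `|E1 n| <= 4 * (n%:R * be ^+ n) / (1 - be) ^+ 3.
Proof.
move=> hn; case/andP: hbe => hb0 hb1.
have hc : 0 < (1 - be) ^+ 3 by apply: exprn_gt0; lra.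
have hx0 : 0 <= be ^+ n by apply: exprn_ge0; lra.
have hx1 : be ^+ n <= 1 by apply: exprn_ile1; lra.
have hm : 1 <= n%:R :> R by rewrite ler1n.
rewrite E1_closed; set x := be ^+ n in hx0 hx1 *.
have hnum0 : 0 <= (2 * n%:R + 1) * (1 - be) * be * x + be ^+ 2 * x ^+ 2.
  apply: addr_ge0; last by apply: mulr_ge0; apply: exprn_ge0; lra.
  apply: mulr_ge0 => //; apply: mulr_ge0; last lra; apply: mulr_ge0; lra.
rewrite ger0_norm; last by apply: divr_ge0 => //; apply: ltW.
apply: ler_wpM2r; first by rewrite invr_ge0; apply: ltW.
have h1 : 0 <= (2 * n%:R + 1) * x * (1 - (1 - be) * be).
  apply: mulr_ge0; [apply: mulr_ge0; lra | nra].
have h2 : 0 <= x * (1 - be ^+ 2 * x).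
  apply: mulr_ge0 => //; rewrite expr2; nra.
have h3 : 0 <= (n%:R - 1) * x by apply: mulr_ge0; lra.
rewrite expr2; nra.
Qed.

Lemma E2_closed n B : (1 <= n)%N -> (1 <= B)%N ->
  E2 n B = ((B%:R - 1) * be * (1 - be) + 2 * B%:R * be ^+ 2
     - B%:R * n%:R * be * (1 - be ^+ 2) * be ^+ n - B%:R * n%:R * be ^+ 2 * (1 - be) * (be ^+ n) ^+ 2
     - 2 * B%:R * be ^+ 2 * (be ^+ n) ^+ 2) /
    (2 * ((n%:R + 1) * B%:R - 1) * ((1 - be) ^+ 3 * (1 + be))).
Proof.
move=> hn hB.
have h1 := ne1 hbe; have h2 := ne2 hbe.
have h3 : (n%:R + 1) * B%:R - 1 != 0 :> R.
  rewrite natr1 -natrM.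
  have : 1 < (n.+1 * B)%:R :> R by rewrite ltr1n; nia.
  move=> h; apply/eqP => h0; lra.
have h4 : 2 != 0 :> R by [].
rewrite /E2 /alpha_eq /alpha_ne natrM -[(n.+1)%:R]natr1.
case: (exE hbe n) => -> ->; rewrite !exprS expr0.
field; by rewrite h1 h2 h3.
Qed.
Lemma E2_bound n B : (1 <= n)%N -> (1 <= B)%N ->
  `|E2 n B| <= (5 * (n%:R)^-1 + 2 * (n%:R * be ^+ n)) / (2 * ((1 - be) ^+ 3 * (1 + be))).
Proof.
move=> hn hB; case/andP: hbe => hb0 hb1.
rewrite E2_closed //.
have hK : 0 < (1 - be) ^+ 3 * (1 + be) by apply: mulr_gt0; [apply: exprn_gt0; lra | lra].
have hx0 : 0 <= be ^+ n by apply: exprn_ge0; lra.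
have hx1 : be ^+ n <= 1 by apply: exprn_ile1; lra.
have hm : 1 <= n%:R :> R by rewrite ler1n.
have hb : 1 <= B%:R :> R by rewrite ler1n.
set x := be ^+ n in hx0 hx1 *.
set m := n%:R in hm *.
set b := B%:R in hb *.
set K := (1 - be) ^+ 3 * (1 + be) in hK *.
set Num := (b - 1) * be * (1 - be) + 2 * b * be ^+ 2 - b * m * be * (1 - be ^+ 2) * x
   - b * m * be ^+ 2 * (1 - be) * x ^+ 2 - 2 * b * be ^+ 2 * x ^+ 2.
have hD : 0 < 2 * ((m + 1) * b - 1) * K.
  apply: mulr_gt0 => //; apply: mulr_gt0; first lra.
  have : 0 <= (m - 1) * b + 2 * (b - 1) by apply: addr_ge0; [apply: mulr_ge0; lra | lra].
  nra.
have hN : `|Num| <= 5 * b + 2 * (b * m * x).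
  have hbmx : 0 <= b * m * x by apply: mulr_ge0 => //; apply: mulr_ge0; lra.
  have t1a : 0 <= (b - 1) * (be * (1 - be)) by apply: mulr_ge0; [lra | apply: mulr_ge0; lra].
  have t1b : (b - 1) * (be * (1 - be)) <= b - 1.
    rewrite -[X in _ <= X]mulr1; apply: ler_wpM2l; [lra | nra].
  have hb2 : 0 <= be ^+ 2 <= 1 by rewrite exprn_ge0 ?exprn_ile1 //; lra.
  case/andP: hb2 => hb2a hb2b.
  have t2a : 0 <= b * be ^+ 2 by apply: mulr_ge0; [lra | apply: exprn_ge0; lra].
  have t2b : b * be ^+ 2 <= b.
    rewrite -[X in _ <= X]mulr1; apply: ler_wpM2l; lra.
  have hx2a : 0 <= x ^+ 2 by apply: exprn_ge0.
  have hx2b : x ^+ 2 <= 1 by apply: exprn_ile1.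
  have q3 : 0 <= be * (1 - be ^+ 2) <= 1.
    apply/andP; split; first by apply: mulr_ge0; lra.
    apply: mulr_ile1; lra.
  have t3a : 0 <= b * m * x * (be * (1 - be ^+ 2)) by apply: mulr_ge0 => //; by case/andP: q3.
  have t3b : b * m * x * (be * (1 - be ^+ 2)) <= b * m * x.
    rewrite -[X in _ <= X]mulr1; apply: ler_wpM2l => //; by case/andP: q3.
  have q4' : 0 <= be ^+ 2 * (1 - be) <= 1.
    apply/andP; split; first by apply: mulr_ge0; lra.
    apply: mulr_ile1; lra.
  case/andP: q4' => q4a q4b.
  have q4 : 0 <= be ^+ 2 * (1 - be) * x <= 1.
    apply/andP; split; first by apply: mulr_ge0.
    by apply: mulr_ile1.
  have t4a : 0 <= b * m * x * (be ^+ 2 * (1 - be) * x) by apply: mulr_ge0 => //; by case/andP: q4.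
  have t4b : b * m * x * (be ^+ 2 * (1 - be) * x) <= b * m * x.
    rewrite -[X in _ <= X]mulr1; apply: ler_wpM2l => //; by case/andP: q4.
  have q5 : 0 <= be ^+ 2 * x ^+ 2 <= 1.
    apply/andP; split; first by apply: mulr_ge0.
    by apply: mulr_ile1.
  have t5a : 0 <= b * (be ^+ 2 * x ^+ 2) by apply: mulr_ge0; [lra | by case/andP: q5].
  have t5b : b * (be ^+ 2 * x ^+ 2) <= b.
    rewrite -[X in _ <= X]mulr1; apply: ler_wpM2l; [lra | by case/andP: q5].
  have eN : Num = (b - 1) * (be * (1 - be)) + 2 * (b * be ^+ 2) - b * m * x * (be * (1 - be ^+ 2))
     - b * m * x * (be ^+ 2 * (1 - be) * x) - 2 * (b * (be ^+ 2 * x ^+ 2)) by rewrite /Num; ring.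
  apply/ler_normlP; rewrite eN; split; lra.
rewrite normrM normfV (gtr0_norm hD).
apply: (@le_trans _ _ ((5 * b + 2 * (b * m * x)) / (2 * ((m + 1) * b - 1) * K))).
  by apply: ler_wpM2r => //; rewrite invr_ge0; apply: ltW.
rewrite ler_pdivrMr //.
have hK0 : K != 0 by rewrite gt_eqF.
have hm0 : m != 0 by rewrite gt_eqF //; lra.
rewrite (_ : (5 * m^-1 + 2 * (m * x)) / (2 * K) * (2 * ((m + 1) * b - 1) * K)
   = (5 * m^-1 + 2 * (m * x)) * ((m + 1) * b - 1)); last by field; rewrite hK0 andbT; exact: hm0.
have hV : m^-1 * m * b = b by rewrite mulVf // mul1r.
have hV0 : 0 < m^-1 by rewrite invr_gt0; lra.
have g1 : 0 <= (5 * m^-1 + 2 * (m * x)) * (b - 1).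
  apply: mulr_ge0; last lra; apply: addr_ge0; [apply: mulr_ge0; lra | apply: mulr_ge0; [lra | apply: mulr_ge0; lra]].
have g2 : 0 <= b * x * m * (m - 1) by apply: mulr_ge0; [apply: mulr_ge0; [apply: mulr_ge0; lra|lra] | lra].
nra.
Qed.
End Lim.
Lemma e_small (R : realType) (be : R) (hbe : 0 < be < 1) (eps : R) : 0 < eps ->
  exists n0 : nat, forall n B : nat, (n0 <= n)%N -> (1 <= B <= n.+1)%N ->
   `|E1 be n| < eps /\ `|E2 be n B| < eps.
Proof.
move=> he; have /andP [hb0 hb1] := hbe.
have hc : 0 < (1 - be) ^+ 3 by apply: exprn_gt0; lra.
set c := (1 - be) ^+ 3 in hc.
have hd : 0 < eps * c / 8 by apply: divr_gt0 => //; apply: mulr_gt0.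
have [n0 Hn] := small hbe hd.
exists n0 => n B hn hB; have [hn1 [hU hV]] := Hn n hn.
have hB1 : (1 <= B)%N by case/andP: hB.
have hU0 : 0 <= n%:R * be ^+ n by apply: mulr_ge0; [exact: ler0n | apply: exprn_ge0; lra].
have hV0 : 0 <= (n%:R)^-1 :> R by rewrite invr_ge0 ler0n.
have hec : 0 < eps * c by apply: mulr_gt0.
have hdc : 0 <= eps * c * be by apply: mulr_ge0; [apply: mulr_ge0; lra | lra].
split.
  apply: le_lt_trans (E1_bound hbe hn1) _.
  rewrite ltr_pdivrMr // -/c; lra.
apply: le_lt_trans (E2_bound hbe hn1 hB1) _.
rewrite ltr_pdivrMr; last by apply: mulr_gt0 => //; apply: mulr_gt0 => //; lra.
rewrite -/c; lra.
Qed.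

Unset Implicit Arguments. Unset Strict Implicit.
Theorem mainTheorem14 (R : realType) (beta : R) (hbeta : 0 < beta < 1) :
  (forall (n B d : nat), (1 <= n)%N -> (1 <= B <= n.+1)%N ->
   forall (l : 'I_(n.+1 * B) -> 'cV[R]_d -> R),
   (forall s, twice_differentiable (l s)) ->
   forall theta : 'cV[R]_d,
   Epi (fun pi => c2 beta l pi theta) =
     (alpha_eq beta n + alpha_ne beta n) *:
        (hess (fullL l) theta *m grad (fullL l) theta)
     + (alpha_eq beta n * n%:R / (2 * ((n.+1 * B)%:R - 1))
        - alpha_ne beta n / (2 * ((n.+1 * B)%:R - 1))) *:
        grad (trSigma l) theta)
  /\
  (exists e1 e2 : nat -> nat -> R,
     (forall eps : R, 0 < eps -> exists n0 : nat, forall n B : nat,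
        (n0 <= n)%N -> (1 <= B <= n.+1)%N -> `|e1 n B| < eps /\ `|e2 n B| < eps)
     /\
     (forall (n B d : nat), (1 <= n)%N -> (1 <= B <= n.+1)%N ->
      forall (l : 'I_(n.+1 * B) -> 'cV[R]_d -> R),
      (forall s, twice_differentiable (l s)) ->
      forall theta : 'cV[R]_d,
      Epi (fun pi => c2 beta l pi theta) =
        (- beta / (1 - beta) ^+ 3 + e1 n B) *:
           (hess (fullL l) theta *m grad (fullL l) theta)
        + (- beta / (2 * (1 - beta) ^+ 2 * (1 + beta)) + e2 n B) *:
           ((B%:R)^-1 *: grad (trSigma l) theta))).
Proof.
split.
  move=> n B d hn hB l hl theta; exact: part1.
exists (fun n B => E1 beta n), (fun n B => E2 beta n B); split.
  move=> eps he; have [n0 H] := e_small hbeta he; exists n0 => n B hn hB; exact: H.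
move=> n B d hn hB l hl theta.
rewrite (part1 hbeta hn hB hl theta).
have h1 := ne1 hbeta; have h2 := ne2 hbeta.
have hB0 : B%:R != 0 :> R by rewrite pnatr_eq0 -lt0n; case/andP: hB.
congr (_ *: _ + _).
  by rewrite /E1; ring.
rewrite scalerA; congr (_ *: _).
have hM1 : (1 + n%:R) * B%:R - 1 != 0 :> R.
  rewrite [1 + _]addrC natr1 -natrM.
  have : 1 < (n.+1 * B)%:R :> R by rewrite ltr1n; case/andP: hB => hB1 _; nia.
  move=> h; apply/eqP => h0; lra.
by rewrite /E2; field; rewrite hB0 h1 h2 hM1.
Qed.
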